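(* Let $S$ be a semidomain. Then $S[x]$ is a GCD-semidomain if and only if $S$ is a GCD-domain (i.e., $S$ is an integral domain and a GCD-semidomain).
   Context: A semidomain is a subset $S$ of an integral domain $R$ containing $0$ and $1$ and closed under addition and multiplication; $S[x]$ is the semidomain of polynomials in $R[x]$ with coefficients in $S$. For a semidomain $T$, $T^*=T\setminus\{0\}$ is a multiplicative monoid. For a nonempty finite subset $F\subseteq T^*$, a greatest common divisor of $F$ is a common divisor $d\in T^*$ of all elements of $F$ (in $T^*$) that is divisible by every common divisor of $F$. $T$ is a GCD-semidomain if every nonempty finite subset of $T^*$ has a greatest common divisor. *)

(* Defs.v *)
From mathcomp Require Import all_boot all_order all_algebra.
Set Implicit Arguments. Unset Strict Implicit. Unset Printing Implicit Defensive.
Import GRing.Theory.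
Local Open Scope ring_scope.

Definition semidomain (R : idomainType) (S : {pred R}) : Prop :=
  [/\ 0 \in S, 1 \in S,
      (forall x y, x \in S -> y \in S -> x + y \in S) &
      (forall x y, x \in S -> y \in S -> x * y \in S)].

(* A semidomain is an integral domain iff it has additive inverses. *)
Definition is_subring_domain (R : idomainType) (S : {pred R}) : Prop :=
  forall x, x \in S -> - x \in S.

Definition polysemi (R : idomainType) (S : {pred R}) : {pred {poly R}} :=
  [pred p : {poly R} | p \is a polyOver S].

Definition divides_in (A : idomainType) (T : {pred A}) (a b : A) : Prop :=
  exists c, [/\ c \in T, c != 0 & b = a * c].

Definition is_gcd_of (A : idomainType) (T : {pred A}) (F : seq A) (d : A) : Prop :=
  [/\ d \in T, d != 0,
      (forall f, f \in F -> divides_in T d f) &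
      (forall c, c \in T -> c != 0 ->
         (forall f, f \in F -> divides_in T c f) -> divides_in T c d)].

Definition GCD_semidomain (A : idomainType) (T : {pred A}) : Prop :=
  forall F : seq A, F != [::] ->
    (forall f, f \in F -> (f \in T) && (f != 0)) ->
    exists d, is_gcd_of T F d.

(* Main.v *)
From HB Require Import structures.
Require Import Defs.
From mathcomp Require Import all_boot all_order all_algebra.
From mathcomp Require Import ring zify.
Set Implicit Arguments. Unset Strict Implicit. Unset Printing Implicit Defensive.
Import GRing.Theory.
Local Open Scope ring_scope.

Definition semS (R : idomainType) (S : {pred R}) (H : semidomain S) : {pred R} := S.
Lemma semS_closed (R : idomainType) (S : {pred R}) (H : semidomain S) : semiring_closed (semS H).
Proof. case: H => H0 H1 HD HM; split; split => //. Qed.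
HB.instance Definition _ (R : idomainType) (S : {pred R}) (H : semidomain S) :=
  GRing.isSemiringClosed.Build R (semS H) (semS_closed H).

Definition ringS (R : idomainType) (S : {pred R}) (H : semidomain S /\ is_subring_domain S) : {pred R} := S.
Lemma ringS_closed (R : idomainType) (S : {pred R}) H : subring_closed (@ringS R S H).
Proof. case: (H) => [[H0 H1 HD HM] HN]; split => //.
  by move=> x y hx hy; apply: (HD) => //; apply: (HN).
Qed.
HB.instance Definition _ (R : idomainType) (S : {pred R}) H :=
  GRing.isSubringClosed.Build R (@ringS R S H) (ringS_closed H).
From Stdlib Require Import Classical ClassicalEpsilon.
Section Forward.
Variables (R : idomainType) (S : {pred R}) (H : semidomain S).

Let SS := semS H.
Let pS (p : {poly R}) : p \in polysemi S = (p \is a polyOver SS). Proof. by []. Qed.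

Lemma fwd_neg1 : GCD_semidomain (polysemi S) -> - 1 \in S.
Proof.
move=> G.
pose a : {poly R} := 'X + 1.
pose b : {poly R} := 'X^2 + 'X + 1.
pose c : {poly R} := 'X^2 - 'X + 1.
pose x3 : {poly R} := 'X^3 + 1.
pose e4 : {poly R} := 'X^4 + 'X^2 + 1.
pose f := x3 * b. pose g := a * b.
have aS : a \in polysemi S by rewrite pS rpredD ?polyOverX ?rpred1.
have bS : b \in polysemi S by rewrite pS !rpredD ?polyOverX ?polyOverXn ?rpred1.
have x3S : x3 \in polysemi S by rewrite pS !rpredD ?polyOverX ?polyOverXn ?rpred1.
have e4S : e4 \in polysemi S by rewrite pS !rpredD ?polyOverX ?polyOverXn ?rpred1.
have nz0 (p : {poly R}) : p.[0] = 1 -> p != 0.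
  by move=> hp; apply/eqP => p0; move: hp; rewrite p0 horner0 => /eqP; rewrite eq_sym oner_eq0.
have a0 : a != 0 by apply: nz0; rewrite /a !hornerE.
have b0 : b != 0 by apply: nz0; rewrite /b !hornerE expr0n /= !add0r.
have x30 : x3 != 0 by apply: nz0; rewrite /x3 !hornerE expr0n /= !add0r.
have e40 : e4 != 0 by apply: nz0; rewrite /e4 !hornerE !expr0n /= !add0r.
have fS : f \in polysemi S by rewrite pS rpredM.
have gS : g \in polysemi S by rewrite pS rpredM.
have f0 : f != 0 by rewrite mulf_neq0.
have g0 : g != 0 by rewrite mulf_neq0.
have Ff : f = a * e4 by rewrite /f /a /e4 /x3 /b; ring.
have Fg : f = g * c by rewrite /f /g /a /c /x3 /b; ring.
have [d [dS d0 dF dG]] : exists d, is_gcd_of (polysemi S) [:: f; g] d.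
  by apply: G => // p; rewrite !inE => /orP[]/eqP->; rewrite ?fS ?gS ?f0 ?g0.
have [e [eS e0 de]] : divides_in (polysemi S) a d.
  apply: dG => // p; rewrite !inE => /orP[]/eqP->.
    by exists e4; split.
  by exists b; split.
have [e' [e'S e'0 de']] : divides_in (polysemi S) b d.
  apply: dG => // p; rewrite !inE => /orP[]/eqP->.
    by exists x3; split => //; rewrite /f mulrC.
  by exists a; split => //; rewrite /g mulrC.
have [q [qS q0 dq]] := dF f (mem_head _ _).
have [r [rS r0 dr]] : divides_in (polysemi S) d g by apply: dF; rewrite !inE eqxx orbT.
have : root e' (-1).
  have := congr1 (fun p => p.[-1]) (etrans (esym de) de').
  rewrite /= !hornerM /a /b !hornerE addNr mul0r => /esym/eqP.
  rewrite mulf_eq0 => /orP[|]; last by rewrite rootE.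
  by rewrite sqrrN expr1n subrr add0r oner_eq0.
case/factor_theorem => k ek.
have Ea : 'X - (-1)%:P = a by rewrite /a polyCN opprK.
rewrite Ea in ek.
have dk : d = g * k by rewrite de' ek /g; ring.
have kr : k * r = 1.
  by apply: (mulfI g0); rewrite mulr1 mulrA -dk -dr.
have k0 : k != 0 by apply/eqP => kz; move/eqP: kr; rewrite kz mul0r eq_sym oner_eq0.
have sk : size k = 1%N.
  have := congr1 (fun p : {poly R} => size p) kr; rewrite /= size_mul // size_poly1.
  have := size_poly_gt0 k; have := size_poly_gt0 r; rewrite k0 r0.
  move: (size k) (size r) => [|[|m]] [|n] //= _ _; by rewrite addnS.
have kC := size1_polyC (eq_leq sk).
have Ec : c = k * q.
  apply: (mulfI g0); rewrite -Fg dq dk; ring.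
have : c`_1 = k`_0 * q`_1 by rewrite Ec {1}kC coefCM.
have -> : c`_1 = -1.
  by rewrite /c !(coefD, coefB, coefN, coefXn, coefX, coef1) /= add0r addr0.
have gl : g = 'X^3 + 'X^2 *+ 2 + 'X *+ 2 + 1 by rewrite /g /a /b; ring.
have k0S : k`_0 \in S.
  have : d`_3 = k`_0.
    rewrite dk {1}kC coefMC gl !(coefD, coefMn, coefXn, coefX, coef1) /=.
    by rewrite !mulr0n !addr0 mul0rn addr0 mul1r.
  move=> <-; by move: dS; rewrite pS => /polyOverP.
have q1S : q`_1 \in S by move: qS; rewrite pS => /polyOverP.
move=> ->; case: H => _ _ _ HM; exact: HM.
Qed.

Lemma size_eq1 (p q : {poly R}) (c : R) : c != 0 -> c%:P = p * q -> p != 0 -> q != 0 ->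
  size p = 1%N /\ size q = 1%N.
Proof.
move=> c0 e p0 q0; have := congr1 (fun p : {poly R} => size p) e.
rewrite /= size_mul // size_polyC c0.
have := size_poly_gt0 p; have := size_poly_gt0 q; rewrite p0 q0.
move: (size p) (size q) => [|[|m]] [|[|n]] //= _ _; by rewrite ?addnS.
Qed.

Lemma fwd_gcd : GCD_semidomain (polysemi S) -> GCD_semidomain S.
Proof.
move=> G F Fn FS.
have [d [dS d0 dF dG]] : exists d, is_gcd_of (polysemi S) (map polyC F) d.
  apply: G; first by case: (F) Fn.
  move=> p /mapP [c cF ->]; move/andP: (FS c cF) => [cS c0].
  by rewrite pS polyOverC polyC_eq0 c0 andbT.
have [c0 c0F] : exists c, c \in F by case: (F) Fn => // x s _; exists x; rewrite mem_head.
have [dd _] : size d = 1%N /\ True.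
  have [h [_ h0 eh]] := dF _ (map_f polyC c0F).
  move/andP: (FS c0 c0F) => [_ cz].
  by have [] := size_eq1 cz eh d0 h0.
have dC := size1_polyC (eq_leq dd).
have dSc : d`_0 \in S by move: dS; rewrite pS => /polyOverP.
have dz : d`_0 != 0 by apply: contra d0; rewrite {2}dC => /eqP->; rewrite polyC0.
exists d`_0; split => //.
- move=> f fF; have [h [hS h0 eh]] := dF _ (map_f polyC fF).
  move/andP: (FS f fF) => [_ fz].
  have [_ sh] := size_eq1 fz eh d0 h0.
  have hC := size1_polyC (eq_leq sh).
  have ef : f = d`_0 * h`_0 by rewrite -coefCM -dC -eh coefC.
  exists h`_0; split => //; first by move: hS; rewrite pS => /polyOverP.
  by apply: contra fz; rewrite ef => /eqP->; rewrite mulr0.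
- move=> c cS cz cF.
  have [h [hS h0 eh]] : divides_in (polysemi S) c%:P d.
    apply: dG; rewrite ?pS ?polyOverC ?polyC_eq0 //.
    move=> p /mapP [f fF ->]; have [h [hS h0 eh]] := cF f fF.
    by exists h%:P; split; rewrite ?pS ?polyOverC ?polyC_eq0 ?eh ?polyCM.
  have ed : d`_0 = c * h`_0 by rewrite eh coefCM.
  exists h`_0; split => //; first by move: hS; rewrite pS => /polyOverP.
  by apply: contra dz; rewrite ed => /eqP->; rewrite mulr0.
Qed.
End Forward.
Section Rev.
Variables (R : idomainType) (S : {pred R}) (H : semidomain S /\ is_subring_domain S).
Hypothesis HG : GCD_semidomain S.
Local Notation SS := (ringS H).

Definition dv (a b : R) := exists2 c, c \in SS & b = a * c.

Lemma dv_refl a : dv a a. Proof. by exists 1; rewrite ?rpred1 ?mulr1. Qed.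
Lemma dv0 a : dv a 0. Proof. by exists 0; rewrite ?rpred0 ?mulr0. Qed.
Lemma dv_trans a b c : dv a b -> dv b c -> dv a c.
Proof. by move=> [x xS ->] [y yS ->]; exists (x * y); rewrite ?rpredM ?mulrA. Qed.
Lemma dvMr a b c : c \in SS -> dv a b -> dv a (b * c).
Proof. by move=> cS [x xS ->]; exists (x * c); rewrite ?rpredM ?mulrA. Qed.
Lemma dvMl a b c : c \in SS -> dv a b -> dv a (c * b).
Proof. by move=> cS ab; rewrite mulrC; apply: dvMr. Qed.
Lemma dv_mul a c : c \in SS -> dv a (a * c).
Proof. by move=> cS; exists c. Qed.
Lemma dvD a b c : dv a b -> dv a c -> dv a (b + c).
Proof. by move=> [x xS ->] [y yS ->]; exists (x + y); rewrite ?rpredD ?mulrDr. Qed.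
Lemma dvN a b : dv a b -> dv a (- b).
Proof. by move=> [x xS ->]; exists (- x); rewrite ?rpredN ?mulrN. Qed.
Lemma dvB a b c : dv a b -> dv a c -> dv a (b - c).
Proof. by move=> ab ac; apply: dvD => //; apply: dvN. Qed.
Lemma dv_mul2 a b c d : dv a b -> dv c d -> dv (a * c) (b * d).
Proof. by move=> [x xS ->] [y yS ->]; exists (x * y); rewrite ?rpredM // mulrACA. Qed.
Lemma dv_cancel a b c : a != 0 -> dv (a * b) (a * c) -> dv b c.
Proof. by move=> a0 [x xS]; rewrite -mulrA => /(mulfI a0) ->; exists x. Qed.
Lemma dv0l b : dv 0 b -> b = 0.
Proof. by move=> [x _ ->]; rewrite mul0r. Qed.

Definition isg a b d := [/\ d \in SS, dv d a, dv d b &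
   forall c, c \in SS -> dv c a -> dv c b -> dv c d].

Lemma isg_ex a b : a \in SS -> b \in SS -> exists d, isg a b d.
Proof.
move=> aS bS.
have [->|a0] := eqVneq a 0.
  by exists b; split => //; [exact: dv0|exact: dv_refl].
have [->|b0] := eqVneq b 0.
  by exists a; split => //; [exact: dv_refl|exact: dv0].
have [d [dS d0 dF dG]] : exists d, is_gcd_of S [:: a; b] d.
  by apply: HG => // f; rewrite !inE => /orP[]/eqP->; apply/andP.
have cv x y : divides_in S x y -> dv x y by move=> [c [cS _ ->]]; exists c.
exists d; split => //.
- by apply: cv; apply: dF; rewrite mem_head.
- by apply: cv; apply: dF; rewrite !inE eqxx orbT.
- move=> c cS ca cb.
  have c0 : c != 0 by apply: contra a0 => /eqP c0; move: ca; rewrite c0 => /dv0l ->.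
  have cd x : x != 0 -> dv c x -> divides_in S c x.
    move=> x0 [e eS ex]; exists e; split => //; apply: contra x0 => /eqP e0.
    by rewrite ex e0 mulr0.
  apply: cv; apply: dG => // f; rewrite !inE => /orP[]/eqP->; exact: cd.
Qed.

Definition gcdS a b := epsilon (inhabits 0) (isg a b).
Lemma gcdSP a b : a \in SS -> b \in SS -> isg a b (gcdS a b).
Proof. by move=> aS bS; apply: epsilon_spec; apply: isg_ex. Qed.

Definition contl (s : seq R) := foldr gcdS 0 s.
Lemma contlP s : all (fun x => x \in SS) s ->
  [/\ contl s \in SS, (forall x, x \in s -> dv (contl s) x) &
      forall c, c \in SS -> (forall x, x \in s -> dv c x) -> dv c (contl s)].
Proof.
elim: s => [|x s IH] /=.
  by split => //; rewrite ?rpred0 // => c _ _; apply: dv0.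
case/andP => xS /IH [cS cd cg].
have [gS g1 g2 g3] := gcdSP xS cS.
split => //.
- move=> y; rewrite inE => /orP[/eqP->//|ys]; apply: dv_trans g2 _; exact: cd.
- move=> c c0 hc; apply: g3 => //; first by apply: hc; rewrite mem_head.
  by apply: cg => // y ys; apply: hc; rewrite inE ys orbT.
Qed.

Definition cdiv t (p : {poly R}) := forall i, dv t p`_i.
Definition cont (p : {poly R}) := contl p.

Lemma allS p : p \is a polyOver SS -> all (fun x => x \in SS) p.
Proof. by move=> /polyOverP pS; apply/allP => x /(nthP 0) [i _ <-]. Qed.

Lemma contS p : p \is a polyOver SS -> cont p \in SS.
Proof. by move/allS/contlP => []. Qed.

Lemma cont_div p : p \is a polyOver SS -> cdiv (cont p) p.
Proof.
move/allS/contlP => [_ h _] i.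
case: (ltnP i (size p)) => hi; first by apply: h; rewrite mem_nth.
by rewrite nth_default //; apply: dv0.
Qed.

Lemma cont_max p c : p \is a polyOver SS -> c \in SS -> cdiv c p -> dv c (cont p).
Proof.
move/allS/contlP => [_ _ h] cS cp; apply: h => // x /(nthP 0) [i _ <-]; exact: cp.
Qed.

Lemma cont0 p : p \is a polyOver SS -> p != 0 -> cont p != 0.
Proof.
move=> pS; apply: contra => /eqP c0; apply/eqP/polyP => i.
by have := cont_div pS i; rewrite c0 coef0 => /dv0l.
Qed.

Lemma cdiv_scale a p : p \is a polyOver SS -> cdiv a p ->
  exists2 p', p' \is a polyOver SS & p = a *: p'.
Proof.
move=> pS ap.
pose ch i := epsilon (inhabits 0) (fun c => c \in SS /\ p`_i = a * c).
have chP i : ch i \in SS /\ p`_i = a * ch i.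
  have [c cS e] := ap i.
  by apply: (epsilon_spec (inhabits (0:R)) (fun c => c \in SS /\ p`_i = a * c)); exists c.
exists (\poly_(i < size p) ch i).
  by apply/polyOverP => i; rewrite coef_poly; case: ifP => _; rewrite ?rpred0 //; case: (chP i).
apply/polyP => i; rewrite coefZ coef_poly; case: ifP => hi; first by case: (chP i).
by rewrite mulr0 nth_default // leqNgt hi.
Qed.

Definition prim p := forall t, t \in SS -> cdiv t p -> dv t 1.

Lemma decomp p : p \is a polyOver SS -> p != 0 ->
  exists2 p1, p1 \is a polyOver SS & p = cont p *: p1 /\ prim p1.
Proof.
move=> pS p0; have c0 := cont0 pS p0.
have [p1 p1S ep] := cdiv_scale pS (cont_div pS).
exists p1 => //; split => // t tS tp.
have : dv (cont p * t) (cont p).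
  apply: cont_max => //; first by rewrite rpredM ?contS.
  move=> i; have -> : p`_i = cont p * p1`_i by rewrite {1}ep coefZ.
  by apply: dv_mul2; [exact: dv_refl | exact: tp].
by rewrite -{2}(mulr1 (cont p)); apply: dv_cancel.
Qed.

Lemma coefS p i : p \is a polyOver SS -> p`_i \in SS.
Proof. by move/polyOverP. Qed.

Lemma cont_scale k r t : k \in SS -> r \is a polyOver SS -> t \in SS ->
  cdiv t (k *: r) -> dv t (k * cont r).
Proof.
move=> kS rS tS tk.
have [->|k0] := eqVneq k 0; first by rewrite mul0r; apply: dv0.
have krS : k *: r \is a polyOver SS by rewrite polyOverZ.
have [e eS De] : dv k (cont (k *: r)).
  by apply: cont_max => // i; rewrite coefZ; apply: dv_mul; apply: coefS.
have er : cdiv e r.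
  move=> i; have [x xS hx] := cont_div krS i.
  by move: hx; rewrite De coefZ -mulrA => /(mulfI k0) ->; exists x.
apply: dv_trans (cont_max krS tS tk) _; rewrite De.
by apply: dv_mul2; [exact: dv_refl | exact: cont_max].
Qed.

Lemma euclid t a b : t \in SS -> a \in SS -> b \in SS ->
  (forall u, u \in SS -> dv u t -> dv u a -> dv u 1) -> dv t (a * b) -> dv t b.
Proof.
move=> tS aS bS cop tab.
have [->|b0] := eqVneq b 0; first exact: dv0.
have [DS D1 D2 D3] := gcdSP (rpredM bS tS) (rpredM bS aS).
have [e eS De] : dv b (gcdS (b * t) (b * a)) by apply: D3 => //; apply: dv_mul.
rewrite De in D1 D2.
have e1 : dv e 1 by apply: cop => //; apply: dv_cancel b0 _.
apply: dv_trans (_ : dv t (b * e)) _.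
  rewrite -De; apply: D3 => //; first by rewrite mulrC; apply: dv_mul.
  by rewrite mulrC.
by rewrite -{2}(mulr1 b); apply: dv_mul2 => //; apply: dv_refl.
Qed.

Definition GM N := forall p q, p \is a polyOver SS -> q \is a polyOver SS ->
  (size p + size q <= N)%N -> forall t, t \in SS -> cdiv t (p * q) -> dv t (cont p * cont q).

Lemma cont_poly0 : cont 0 = 0.
Proof. by rewrite /cont polyseq0. Qed.

Lemma key N p q t u : GM N -> p \is a polyOver SS -> q \is a polyOver SS ->
  p != 0 -> q != 0 -> prim p -> prim q -> (size p + size q <= N.+1)%N ->
  t \in SS -> cdiv t (p * q) -> u \in SS -> dv u t -> dv u (lead_coef p) -> dv u 1.
Proof.
move=> IH pS qS p0 q0 pp pq hN tS tpq uS ut ua.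
set a := lead_coef p; set m := (size p).-1.
have aS : a \in SS by apply: coefS.
have sp : size p = m.+1 by rewrite /m prednK // size_poly_gt0.
set p' := p - a *: 'X^m.
have p'S : p' \is a polyOver SS by rewrite rpredB ?polyOverZ ?polyOverXn.
have sp' : (size p' <= m)%N.
  apply/leq_sizeP => j hj; rewrite coefB coefZ coefXn.
  case: (ltngtP j m) => hjm.
  - by move: hj; rewrite leqNgt hjm.
  - by rewrite mulr0 subr0 nth_default // sp.
  - by rewrite hjm mulr1 subrr.
have u'q : cdiv u (p' * q).
  move=> i; have -> : p' * q = p * q - a *: ('X^m * q) by rewrite mulrBl scalerAl.
  rewrite coefB coefZ; apply: dvB; first exact: dv_trans ut (tpq i).
  by apply: dvMr; rewrite ?coefS ?rpredM ?polyOverXn.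
have sz : (size p' + size q <= N)%N.
  by move: hN; rewrite sp addSn ltnS; apply: leq_trans; rewrite leq_add2r.
have h1 := IH p' q p'S qS sz u uS u'q.
have cq1 : dv (cont q) 1 by apply: pq; [exact: contS | exact: cont_div].
have up' : dv u (cont p').
  apply: dv_trans h1 _; rewrite -{2}(mulr1 (cont p')).
  by apply: dv_mul2; [exact: dv_refl | exact: cq1].
apply: pp => // i.
have -> : p`_i = a * ('X^m)`_i + p'`_i by rewrite /p' coefB coefZ addrC subrK.
apply: dvD; first by apply: dvMr => //; rewrite coefS ?polyOverXn.
by apply: dv_trans up' _; apply: cont_div.
Qed.

Lemma gaussM N : GM N.
Proof.
elim: N => [|N IH] p q pS qS hN t tS tpq.
  move: hN; rewrite leqn0 addn_eq0 size_poly_eq0 => /andP[/eqP-> _].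
  by rewrite cont_poly0 mul0r; apply: dv0.
have [->|p0] := eqVneq p 0; first by rewrite cont_poly0 mul0r; apply: dv0.
have [->|q0] := eqVneq q 0; first by rewrite cont_poly0 mulr0; apply: dv0.
have [p1 p1S [ep pp]] := decomp pS p0.
have [q1 q1S [eq pq]] := decomp qS q0.
have cp0 := cont0 pS p0; have cq0 := cont0 qS q0.
have p10 : p1 != 0 by apply: contra p0; rewrite ep => /eqP->; rewrite scaler0.
have q10 : q1 != 0 by apply: contra q0; rewrite eq => /eqP->; rewrite scaler0.
have hN1 : (size p1 + size q1 <= N.+1)%N.
  by move: hN; rewrite {1}ep {1}eq !size_scale.
have epq : p * q = (cont p * cont q) *: (p1 * q1).
  by rewrite {1}ep {1}eq -scalerAl -scalerAr scalerA.
have pqS : p1 * q1 \is a polyOver SS by rewrite rpredM.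
have := cont_scale (rpredM (contS pS) (contS qS)) pqS tS.
rewrite -epq => /(_ tpq) tc.
set c := cont (p1 * q1).
have cS : c \in SS by apply: contS.
have cd : cdiv c (p1 * q1) by apply: cont_div.
have c1 : dv c 1.
  have cab : dv c (lead_coef p1 * lead_coef q1).
    by rewrite -lead_coefM lead_coefE; apply: cd.
  have cb := euclid cS (coefS _ p1S) (coefS _ q1S)
    (fun u uS ut ua => key IH p1S q1S p10 q10 pp pq hN1 cS cd uS ut ua) cab.
  apply: (key IH q1S p1S q10 p10 pq pp _ cS _ cS (dv_refl c) cb).
    by rewrite addnC.
  by rewrite mulrC.
apply: dv_trans tc _; rewrite -{2}(mulr1 (cont p * cont q)).
by apply: dv_mul2; [exact: dv_refl | done].
Qed.

Lemma gaussG p q a : p \is a polyOver SS -> q \is a polyOver SS -> prim p ->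
  a \in SS -> cdiv a (p * q) -> cdiv a q.
Proof.
move=> pS qS pp aS apq.
have := @gaussM _ p q pS qS (leqnn _) a aS apq.
have cp1 : dv (cont p) 1 by apply: pp; [exact: contS | exact: cont_div].
move=> h i; apply: dv_trans (cont_div qS i).
apply: dv_trans h _; rewrite -{2}(mul1r (cont q)).
by apply: dv_mul2; [done | exact: dv_refl].
Qed.

Lemma scaleI (a : R) (p q : {poly R}) : a != 0 -> a *: p = a *: q -> p = q.
Proof. by move=> a0; rewrite -!mul_polyC; apply: mulfI; rewrite polyC_eq0. Qed.

Lemma pdiv_aux n f h : f \is a polyOver SS -> h \is a polyOver SS -> h != 0 ->
  (size f <= n)%N ->
  exists k, exists2 q, q \is a polyOver SS & exists2 r, r \is a polyOver SS &
    (lead_coef h ^+ k) *: f = q * h + r /\ (size r < size h)%N.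
Proof.
move=> + hS h0; elim: n f => [|n IH] f fS sf.
  exists 0%N; exists 0; rewrite ?rpred0 //; exists f => //.
  by rewrite expr0 scale1r mul0r add0r; split => //; move: sf; rewrite leqn0 => /eqP->; rewrite size_poly_gt0.
have [lt|ge] := ltnP (size f) (size h).
  by exists 0%N; exists 0; rewrite ?rpred0 //; exists f => //; rewrite expr0 scale1r mul0r add0r.
set m := (size f - size h)%N.
set f1 := lead_coef h *: f - lead_coef f *: ('X^m * h).
have lhS : lead_coef h \in SS by apply: coefS.
have lfS : lead_coef f \in SS by apply: coefS.
have f1S : f1 \is a polyOver SS.
  by rewrite rpredB ?polyOverZ ?rpredM ?polyOverXn.
have shp : (0 < size h)%N by rewrite size_poly_gt0.
have sf1 : (size f1 <= n)%N.
  apply: leq_trans (_ : (size f).-1 <= n)%N; last by move: sf; case: (size f).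
  apply/leq_sizeP => j hj; rewrite coefB !coefZ coefXnM.
  have jm : (j < m)%N = false.
    apply/negbTE; rewrite -leqNgt; move: hj ge shp; rewrite /m.
    move: (size f) (size h) => a b; lia.
  rewrite jm.
  have [jf|jf] := eqVneq j (size f).-1.
    have -> : (j - m = (size h).-1)%N.
      by move: jf ge shp; rewrite /m; move: (size f) (size h) => a b; lia.
    by rewrite jf -!lead_coefE mulrC subrr.
  rewrite !nth_default ?mulr0 ?subrr //.
    by move: jf hj ge shp; rewrite /m; move: (size f) (size h) => a b; lia.
  by move: jf hj; move: (size f) => a; lia.
have [k [q qS [r rS [e sr]]]] := IH f1 f1S sf1.
exists k.+1; exists (q + (lead_coef h ^+ k * lead_coef f) *: 'X^m).
  by rewrite rpredD ?polyOverZ ?rpredM ?rpredX ?polyOverXn ?polyOverX.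
exists r => //; split => //.
have ef : lead_coef h *: f = f1 + lead_coef f *: ('X^m * h) by rewrite /f1 subrK.
rewrite exprSr -scalerA ef scalerDr e -!mul_polyC !polyCM.
ring.
Qed.

Definition inI (f g h : {poly R}) := exists u, exists v,
  [/\ u \is a polyOver SS, v \is a polyOver SS & h = u * f + v * g].

Lemma min_aux f g n h : inI f g h -> h != 0 -> (size h <= n)%N ->
  exists h0, [/\ inI f g h0, h0 != 0 &
    forall h', inI f g h' -> h' != 0 -> (size h0 <= size h')%N].
Proof.
elim: n h => [|n IH] h hI h0 sh.
  by move: sh; rewrite leqn0 size_poly_eq0 (negbTE h0).
case: (classic (exists h', [/\ inI f g h', h' != 0 & (size h' < size h)%N])).
  case=> h' [h'I h'0 sh']; apply: (IH h') => //.
  by rewrite -ltnS; apply: leq_trans sh' sh.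
move=> nex; exists h; split => // h' h'I h'0; rewrite leqNgt; apply/negP => lt.
by apply: nex; exists h'.
Qed.

Lemma hdiv f g h ch h' phi : f \is a polyOver SS -> g \is a polyOver SS ->
  inI f g h -> h != 0 -> (forall h2, inI f g h2 -> h2 != 0 -> (size h <= size h2)%N) ->
  h' \is a polyOver SS -> prim h' -> ch \in SS -> h = ch *: h' ->
  inI f g phi -> exists2 w, w \is a polyOver SS & phi = h' * w.
Proof.
move=> fS gS [u [v [uS vS eh]]] h0 hmin h'S ph' chS ehh [u1 [v1 [u1S v1S ephi]]].
have hS : h \is a polyOver SS by rewrite eh rpredD ?rpredM.
have phiS : phi \is a polyOver SS by rewrite ephi rpredD ?rpredM.
have [k [q qS [r rS [e sr]]]] := pdiv_aux phiS hS h0 (leqnn _).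
set a := lead_coef h ^+ k in e.
have aS : a \in SS by rewrite rpredX ?coefS.
have a0 : a != 0 by rewrite expf_neq0 // lead_coef_eq0.
have r0 : r = 0.
  apply/eqP; apply/negPn/negP => rn0.
  have : (size h <= size r)%N.
    apply: hmin rn0; exists (a *: u1 - q * u); exists (a *: v1 - q * v).
    split; rewrite ?rpredB ?polyOverZ ?rpredM //.
    have -> : r = a *: phi - q * h by rewrite e addrC addKr.
    rewrite ephi eh -!mul_polyC; ring.
  by rewrite leqNgt sr.
have e2 : a *: phi = h' * (ch *: q) by rewrite e r0 addr0 ehh -!scalerAr [q * h']mulrC.
have : cdiv a (h' * (ch *: q)).
  by move=> i; rewrite -e2 coefZ; apply: dv_mul; apply: coefS.
move/(gaussG h'S (polyOverZ chS qS) ph' aS) => ad.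
have [w wS ew] := cdiv_scale (polyOverZ chS qS) ad.
exists w => //; apply: (scaleI a0); rewrite e2 ew scalerAr //.
Qed.

Lemma psE p : (p \in polysemi S) = (p \is a polyOver SS). Proof. by []. Qed.

Lemma pair_gcd f g : f \is a polyOver SS -> g \is a polyOver SS -> f != 0 -> g != 0 ->
  exists d, is_gcd_of (polysemi S) [:: f; g] d.
Proof.
move=> fS gS f0 g0.
have fI : inI f g f by exists 1; exists 0; split; rewrite ?rpred1 ?rpred0 // mul1r mul0r addr0.
have gI : inI f g g by exists 0; exists 1; split; rewrite ?rpred1 ?rpred0 // mul1r mul0r add0r.
have [h [hI h0 hmin]] := min_aux fI f0 (leqnn _).
have hS : h \is a polyOver SS by case: hI => [u [v [uS vS ->]]]; rewrite rpredD ?rpredM.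
have [h' h'S [ehh ph']] := decomp hS h0.
have chS := contS hS; have ch0 := cont0 hS h0.
have h'0 : h' != 0 by apply: contra h0; rewrite ehh => /eqP->; rewrite scaler0.
have cfS := contS fS; have cgS := contS gS.
have [gcS gcf gcg gcm] := gcdSP cfS cgS.
set gc := gcdS (cont f) (cont g) in gcS gcf gcg gcm.
have gc0 : gc != 0.
  by apply: contra (cont0 fS f0) => /eqP gz; move: gcf; rewrite gz => /dv0l ->.
have GS : gc *: h' \is a polyOver SS by rewrite polyOverZ.
have G0 : gc *: h' != 0 by rewrite -mul_polyC mulf_neq0 ?polyC_eq0.
have divG phi : phi \is a polyOver SS -> phi != 0 -> inI f g phi ->
    dv gc (cont phi) -> divides_in (polysemi S) (gc *: h') phi.
  move=> phiS phi0 phiI gcp.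
  have [w wS ew] := hdiv fS gS hI h0 hmin h'S ph' chS ehh phiI.
  have : cdiv (cont phi) (h' * w) by rewrite -ew; apply: cont_div.
  move/(gaussG h'S wS ph' (contS phiS)) => cw.
  have [w' w'S ew'] : exists2 w', w' \is a polyOver SS & w = gc *: w'.
    by apply: cdiv_scale => // i; apply: dv_trans gcp (cw i).
  have e' : phi = gc *: h' * w' by rewrite ew ew' -scalerAl -scalerAr.
  exists w'; split; [by rewrite psE | | by []].
  by apply: contra phi0; rewrite e' => /eqP->; rewrite mulr0.
exists (gc *: h'); split => //.
- move=> p; rewrite !inE => /orP[]/eqP->.
    by apply: divG => //.
  by apply: divG => //.
- move=> D DS D0 Dd.
  have [x [xS x0 fx]] := Dd f (mem_head _ _).
  have [y [yS y0 gy]] : divides_in (polysemi S) D g by apply: Dd; rewrite !inE eqxx orbT.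
  have [D' D'S [eD pD']] := decomp DS D0.
  have cDS := contS DS.
  have [u [v [uS vS eh]]] := hI.
  set e := u * x + v * y.
  have eS : e \is a polyOver SS by rewrite rpredD ?rpredM.
  have he : cont h *: h' = D' * (cont D *: e).
    by rewrite -ehh eh fx gy {1 2}eD /e -!mul_polyC; ring.
  have : cdiv (cont h) (D' * (cont D *: e)).
    by move=> i; rewrite -he coefZ; apply: dv_mul; apply: coefS.
  move/(gaussG D'S (polyOverZ cDS eS) pD' chS) => ce.
  have [e' e'S ee'] := cdiv_scale (polyOverZ cDS eS) ce.
  have h'e : h' = D' * e'.
    by apply: (scaleI ch0); rewrite he ee' scalerAr.
  have cDphi phi z : z \is a polyOver SS -> phi = D * z -> dv (cont D) (cont phi).
    move=> zS ephi; apply: cont_max => //.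
      by rewrite ephi rpredM.
    by move=> i; rewrite ephi {2}eD -scalerAl coefZ; apply: dv_mul; apply: coefS; rewrite rpredM.
  have [s sS es] : dv (cont D) gc.
    by apply: gcm => //; [apply: (cDphi f x) | apply: (cDphi g y)].
  have eG : gc *: h' = D * (s *: e').
    by rewrite es h'e {2}eD -scalerA -scalerAl -scalerAr.
  exists (s *: e'); split; rewrite ?psE ?polyOverZ //.
  by apply: contra G0; rewrite eG => /eqP->; rewrite mulr0.
Qed.
End Rev.

Lemma divides_trans (A : idomainType) (T : {pred A}) :
  (forall x y, x \in T -> y \in T -> x * y \in T) ->
  forall a b c, divides_in T a b -> divides_in T b c -> divides_in T a c.
Proof.
move=> TM a b c [x [xT x0 ->]] [y [yT y0 ->]].
by exists (x * y); split; rewrite ?TM ?mulf_neq0 ?mulrA.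
Qed.

Lemma gcd_list (A : idomainType) (T : {pred A}) :
  (forall x y, x \in T -> y \in T -> x * y \in T) -> 1 \in T ->
  (forall f g, f \in T -> g \in T -> f != 0 -> g != 0 -> exists d, is_gcd_of T [:: f; g] d) ->
  GCD_semidomain T.
Proof.
move=> TM T1 P2 F; elim: F => [//|f F IH] _ hF.
have /andP [fT f0] := hF f (mem_head _ _).
case: F IH hF => [|f' F'] IH hF.
  exists f; split => //.
    by move=> x; rewrite inE => /eqP->; exists 1; split; rewrite ?oner_eq0 ?mulr1.
  by move=> c cT c0 /(_ f (mem_head _ _)).
have [d' [d'T d'0 d'F d'G]] : exists d', is_gcd_of T (f' :: F') d'.
  by apply: IH => // x xF; apply: hF; rewrite inE xF orbT.
have [d [dT d0 dF dG]] := P2 f d' fT d'T f0 d'0.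
exists d; split => //.
- move=> x; rewrite inE => /orP[/eqP->|xF]; first by apply: dF; rewrite mem_head.
  apply: (divides_trans TM (dF d' _)); first by rewrite !inE eqxx orbT.
  exact: d'F.
- move=> c cT c0 cF; apply: dG => // x; rewrite !inE => /orP[]/eqP->.
    by apply: cF; rewrite mem_head.
  by apply: d'G => // y yF; apply: cF; rewrite inE yF orbT.
Qed.

Theorem proposition5p4 (R : idomainType) (S : {pred R}) :
  semidomain S ->
  (GCD_semidomain (polysemi S) <-> (is_subring_domain S /\ GCD_semidomain S)).
Proof.
move=> H; split.
  move=> G; split; last exact: fwd_gcd G.
  move=> x xS; rewrite -mulN1r; case: (H) => _ _ _ HM; apply: HM => //.
  exact: fwd_neg1 G.
case=> HN HGS.
pose H' : semidomain S /\ is_subring_domain S := conj H HN.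
apply: gcd_list.
- move=> x y; rewrite !(psE H') => xS yS; exact: rpredM.
- by rewrite (psE H') rpred1.
- by move=> f g; rewrite !(psE H'); apply: pair_gcd.
Qed.
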